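(* Consider the uplink of a cell-free massive MIMO system with $M$ access points (APs), each with $L$ antennas, and $K$ user equipments (UEs), each with $N$ antennas. For $m=1,\dots,M$ and $l=1,\dots,K$, let $\mathbf{H}_{ml}\in\mathbb{C}^{L\times N}$ be the random channel between AP $m$ and UE $l$, and for each $k$ let $\mathbf{V}_{mk}\in\mathbb{C}^{L\times N}$ be a random combining matrix used by AP $m$ for UE $k$ (all entries having finite second moments, so all expectations below exist). Let $\mathbf{F}_{l,\mathrm{u}}\in\mathbb{C}^{N\times N}$ be deterministic precoding matrices and $\bar{\mathbf{F}}_{l,\mathrm{u}}=\mathbf{F}_{l,\mathrm{u}}\mathbf{F}_{l,\mathrm{u}}^{H}$. Define $$\mathbf{G}_{kl}=\begin{bmatrix}\mathbf{V}_{1k}^{H}\mathbf{H}_{1l}\\ \vdots\\ \mathbf{V}_{Mk}^{H}\mathbf{H}_{Ml}\end{bmatrix}\in\mathbb{C}^{MN\times N},\qquad \mathbf{S}_k=\mathrm{diag}\big(\mathbb{E}\{\mathbf{V}_{1k}^{H}\mathbf{V}_{1k}\},\dots,\mathbb{E}\{\mathbf{V}_{Mk}^{H}\mathbf{V}_{Mk}\}\big)\in\mathbb{C}^{MN\times MN}$$ (block diagonal), let $\sigma^2>0$, and let $\tau_p<\tau_c$ be positive integers. For a LSFD coefficient matrix $\mathbf{A}_k\in\mathbb{C}^{MN\times N}$ set $$\mathbf{D}_k=\mathbf{A}_k^{H}\mathbb{E}\{\mathbf{G}_{kk}\}\mathbf{F}_{k,\mathrm{u}},\qquad \boldsymbol{\Sigma}_k=\sum_{l=1}^{K}\mathbf{A}_k^{H}\mathbb{E}\{\mathbf{G}_{kl}\bar{\mathbf{F}}_{l,\mathrm{u}}\mathbf{G}_{kl}^{H}\}\mathbf{A}_k-\mathbf{D}_k\mathbf{D}_k^{H}+\sigma^2\mathbf{A}_k^{H}\mathbf{S}_k\mathbf{A}_k,$$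 and $$\mathrm{SE}_k(\mathbf{A}_k)=\Big(1-\frac{\tau_p}{\tau_c}\Big)\log_2\big|\mathbf{I}_N+\mathbf{D}_k^{H}\boldsymbol{\Sigma}_k^{-1}\mathbf{D}_k\big|.$$ Then $\mathrm{SE}_k(\mathbf{A}_k)$ is maximized over $\mathbf{A}_k$ by $$\mathbf{A}_k^{\mathrm{opt}}=\Big(\sum_{l=1}^{K}\mathbb{E}\{\mathbf{G}_{kl}\bar{\mathbf{F}}_{l,\mathrm{u}}\mathbf{G}_{kl}^{H}\}+\sigma^2\mathbf{S}_k\Big)^{-1}\mathbb{E}\{\mathbf{G}_{kk}\}\mathbf{F}_{k,\mathrm{u}},$$ and the maximum value equals $$\mathrm{SE}_k^{\mathrm{opt}}=\Big(1-\frac{\tau_p}{\tau_c}\Big)\log_2\Big|\mathbf{I}_N+\mathbf{F}_{k,\mathrm{u}}^{H}\mathbb{E}\{\mathbf{G}_{kk}\}^{H}\Big(\sum_{l=1}^{K}\mathbb{E}\{\mathbf{G}_{kl}\bar{\mathbf{F}}_{l,\mathrm{u}}\mathbf{G}_{kl}^{H}\}-\mathbb{E}\{\mathbf{G}_{kk}\}\bar{\mathbf{F}}_{k,\mathrm{u}}\mathbb{E}\{\mathbf{G}_{kk}\}^{H}+\sigma^2\mathbf{S}_k\Big)^{-1}\mathbb{E}\{\mathbf{G}_{kk}\}\mathbf{F}_{k,\mathrm{u}}\Big|.$$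
   Context: $|\cdot|$ denotes the determinant, $(\cdot)^H$ the conjugate transpose, and $\mathbb{E}\{\cdot\}$ expectation over the random channels and combining matrices. $\mathbf{A}_k$ ranges over matrices for which $\boldsymbol{\Sigma}_k$ is invertible; the matrices $\sum_{l}\mathbb{E}\{\mathbf{G}_{kl}\bar{\mathbf{F}}_{l,\mathrm{u}}\mathbf{G}_{kl}^{H}\}+\sigma^2\mathbf{S}_k$ and $\sum_{l}\mathbb{E}\{\mathbf{G}_{kl}\bar{\mathbf{F}}_{l,\mathrm{u}}\mathbf{G}_{kl}^{H}\}-\mathbb{E}\{\mathbf{G}_{kk}\}\bar{\mathbf{F}}_{k,\mathrm{u}}\mathbb{E}\{\mathbf{G}_{kk}\}^{H}+\sigma^2\mathbf{S}_k$ are (as implicit in the formulas) assumed invertible. *)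

(* Defs.v *)
From HB Require Import structures.
From mathcomp Require Import all_boot all_order all_algebra.
From mathcomp Require Import all_classical all_reals all_analysis.
From mathcomp Require Import complex.

Set Implicit Arguments.
Unset Strict Implicit.
Unset Printing Implicit Defensive.

Import Order.TTheory GRing.Theory Num.Theory.
Local Open Scope ring_scope.

Definition ctmx (R : realType) (m n : nat) (A : 'M[R[i]]_(m, n)) : 'M[R[i]]_(n, m) :=
  (map_mx Num.conj A)^T.

Section Expect.
Context {d : measure_display} {Omega : measurableType d} {R : realType}
        (P : probability Omega R).

Definition sq_integrable (f : Omega -> R) : Prop :=
  measurable_fun setT f /\ P.-integrable setT (fun w => ((f w) ^+ 2)%:E).

Definition csq_integrable (X : Omega -> R[i]) : Prop :=
  sq_integrable (fun w => complex.Re (X w)) /\ sq_integrable (fun w => complex.Im (X w)).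

Definition mx_sq_integrable (m n : nat) (X : Omega -> 'M[R[i]]_(m, n)) : Prop :=
  forall i j, csq_integrable (fun w => X w i j).

Definition cexpect (X : Omega -> R[i]) : R[i] :=
  Complex (fine ('E_P[fun w => complex.Re (X w)])%E) (fine ('E_P[fun w => complex.Im (X w)])%E).

Definition mexpect (m n : nat) (X : Omega -> 'M[R[i]]_(m, n)) : 'M[R[i]]_(m, n) :=
  \matrix_(i, j) cexpect (fun w => X w i j).

End Expect.

Section CellFree.
Context {d : measure_display} {Omega : measurableType d} {R : realType}
        (P : probability Omega R) (M K L N : nat)
        (H : 'I_M -> 'I_K -> Omega -> 'M[R[i]]_(L, N))
        (V : 'I_M -> 'I_K -> Omega -> 'M[R[i]]_(L, N))
        (F : 'I_K -> 'M[R[i]]_N)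
        (sigma2 : R) (tau_p tau_c : nat).

Definition Fbar (l : 'I_K) : 'M[R[i]]_N := F l *m ctmx (F l).

Definition Gmx (k l : 'I_K) (w : Omega) : 'M[R[i]]_(\sum_(m < M) N, N) :=
  \mxcol_(m < M) (ctmx (V m k w) *m H m l w).

Definition Smx (k : 'I_K) : 'M[R[i]]_(\sum_(m < M) N) :=
  \mxdiag_(m < M) mexpect P (fun w => ctmx (V m k w) *m V m k w).

Definition EGFG (k l : 'I_K) : 'M[R[i]]_(\sum_(m < M) N) :=
  mexpect P (fun w => Gmx k l w *m Fbar l *m ctmx (Gmx k l w)).

Definition EG (k : 'I_K) : 'M[R[i]]_(\sum_(m < M) N, N) := mexpect P (Gmx k k).

Definition sigma2C : R[i] := Complex sigma2 0.

Definition Dmx (k : 'I_K) (A : 'M[R[i]]_(\sum_(m < M) N, N)) : 'M[R[i]]_N :=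
  ctmx A *m EG k *m F k.

Definition Sigmx (k : 'I_K) (A : 'M[R[i]]_(\sum_(m < M) N, N)) : 'M[R[i]]_N :=
  \sum_(l < K) (ctmx A *m EGFG k l *m A) - Dmx k A *m ctmx (Dmx k A)
  + sigma2C *: (ctmx A *m Smx k *m A).

Definition log2 (x : R) : R := ln x / ln 2.

Definition prelog : R := 1 - tau_p%:R / tau_c%:R.

(* SE_k(A_k); the determinant is that of a Hermitian positive definite matrix,
   hence real positive: we take its real part. *)
Definition SE (k : 'I_K) (A : 'M[R[i]]_(\sum_(m < M) N, N)) : R :=
  prelog * log2 (complex.Re (\det (1%:M + ctmx (Dmx k A) *m invmx (Sigmx k A) *m Dmx k A))).

Definition Aopt (k : 'I_K) : 'M[R[i]]_(\sum_(m < M) N, N) :=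
  invmx (\sum_(l < K) EGFG k l + sigma2C *: Smx k) *m EG k *m F k.

Definition SEopt (k : 'I_K) : R :=
  prelog * log2 (complex.Re (\det (1%:M + ctmx (F k) *m ctmx (EG k)
     *m invmx (\sum_(l < K) EGFG k l - EG k *m Fbar k *m ctmx (EG k) + sigma2C *: Smx k)
     *m EG k *m F k))).

End CellFree.

(* Main.v *)
From HB Require Import structures.
From mathcomp Require Import all_boot all_order all_algebra.
From mathcomp Require Import all_classical all_reals all_analysis.
From mathcomp Require Import complex.
From mathcomp Require Import lra measurable_realfun.
Require Import Defs.
Set Implicit Arguments. Unset Strict Implicit. Unset Printing Implicit Defensive.
Import Order.TTheory GRing.Theory Num.Theory.
Local Open Scope ring_scope.

Section LinAlg.
Variable C : numClosedFieldType.

Lemma addmE m n (A B : 'M[C]_(m,n)) i j : (A + B) i j = A i j + B i j.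
Proof. by rewrite mxE. Qed.
Lemma oppmE m n (A : 'M[C]_(m,n)) i j : (- A) i j = - A i j.
Proof. by rewrite mxE. Qed.
Lemma scalemE m n a (A : 'M[C]_(m,n)) i j : (a *: A) i j = a * A i j.
Proof. by rewrite mxE. Qed.

Definition ct m n (A : 'M[C]_(m,n)) : 'M[C]_(n,m) := (map_mx Num.conj A)^T.

Lemma ctE m n (A : 'M[C]_(m,n)) i j : ct A i j = (A j i)^*.
Proof. by rewrite !mxE. Qed.

Lemma ctK m n (A : 'M[C]_(m,n)) : ct (ct A) = A.
Proof. by apply/matrixP=> i j; rewrite !mxE conjCK. Qed.

Lemma ctM m n p (A : 'M[C]_(m,n)) (B : 'M[C]_(n,p)) : ct (A *m B) = ct B *m ct A.
Proof. by rewrite /ct map_mxM trmx_mul. Qed.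

Lemma ctD m n (A B : 'M[C]_(m,n)) : ct (A + B) = ct A + ct B.
Proof. by apply/matrixP=> i j; rewrite !mxE rmorphD. Qed.

Lemma ctN m n (A : 'M[C]_(m,n)) : ct (- A) = - ct A.
Proof. by apply/matrixP=> i j; rewrite !mxE rmorphN. Qed.

Lemma ctB m n (A B : 'M[C]_(m,n)) : ct (A - B) = ct A - ct B.
Proof. by rewrite ctD ctN. Qed.

Lemma ct0 m n : ct (0 : 'M[C]_(m,n)) = 0.
Proof. by apply/matrixP=> i j; rewrite !mxE rmorph0. Qed.

Lemma ctZ m n a (A : 'M[C]_(m,n)) : ct (a *: A) = a^* *: ct A.
Proof. by apply/matrixP=> i j; rewrite !mxE rmorphM. Qed.

Lemma ct_scalar n a : ct (a%:M : 'M[C]_n) = (a^*)%:M.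
Proof. by rewrite /ct map_scalar_mx tr_scalar_mx. Qed.

Lemma ct1 n : ct (1%:M : 'M[C]_n) = 1%:M.
Proof. by rewrite ct_scalar rmorph1. Qed.

Lemma ct_sum m n I (r : seq I) (P : pred I) (F : I -> 'M[C]_(m,n)) :
  ct (\sum_(i <- r | P i) F i) = \sum_(i <- r | P i) ct (F i).
Proof. exact: (big_morph _ (@ctD m n) (@ct0 m n)). Qed.

Lemma ct_inv n (A : 'M[C]_n) : ct (invmx A) = invmx (ct A).
Proof. by rewrite /ct map_invmx trmx_inv. Qed.

Lemma ct_col m1 m2 n (A : 'M[C]_(m1,n)) (B : 'M[C]_(m2,n)) :
  ct (col_mx A B) = row_mx (ct A) (ct B).
Proof. by rewrite /ct map_col_mx tr_col_mx. Qed.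

Lemma ct11 (A : 'M[C]_1) : ct A 0 0 = (A 0 0)^*.
Proof. by rewrite !mxE. Qed.

Definition qf n (M : 'M[C]_n) (x : 'cV[C]_n) : C := (ct x *m M *m x) 0 0.
Definition psd n (M : 'M[C]_n) := forall x, 0 <= qf M x.
Definition pd n (M : 'M[C]_n) := forall x, x != 0 -> 0 < qf M x.

Lemma qfD n (M E : 'M[C]_n) x : qf (M + E) x = qf M x + qf E x.
Proof. by rewrite /qf mulmxDr mulmxDl addmE. Qed.

Lemma qfN n (M : 'M[C]_n) x : qf (- M) x = - qf M x.
Proof. by rewrite /qf mulmxN mulNmx oppmE. Qed.

Lemma qfB n (M E : 'M[C]_n) x : qf (M - E) x = qf M x - qf E x.
Proof. by rewrite qfD qfN. Qed.

Lemma qf_ct n (M : 'M[C]_n) x : qf (ct M) x = (qf M x)^*.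
Proof. by rewrite /qf -ct11 !ctM ctK mulmxA. Qed.

Lemma qf_cong n p (Q : 'M[C]_n) (A : 'M[C]_(n,p)) x :
  qf (ct A *m Q *m A) x = qf Q (A *m x).
Proof. by rewrite /qf ctM !mulmxA. Qed.

Lemma psd_cong n p (Q : 'M[C]_n) (A : 'M[C]_(n,p)) : psd Q -> psd (ct A *m Q *m A).
Proof. by move=> hQ x; rewrite qf_cong. Qed.

Lemma psdD n (M E : 'M[C]_n) : psd M -> psd E -> psd (M + E).
Proof. by move=> hM hE x; rewrite qfD addr_ge0. Qed.

Lemma pd_psd n (M : 'M[C]_n) : pd M -> psd M.
Proof.
move=> hM x; have [->|nz] := eqVneq x 0; last exact/ltW/hM.
by rewrite /qf mulmx0 mxE.
Qed.

Lemma pdD n (M E : 'M[C]_n) : pd M -> psd E -> pd (M + E).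
Proof. by move=> hM hE x nz; rewrite qfD; apply: lt_le_trans (hM x nz) _; rewrite lerDl. Qed.

(* polarization *)
Lemma qf0_eq0 n (N : 'M[C]_n) : (forall x, qf N x = 0) -> N = 0.
Proof.
move=> h.
pose B (x y : 'cV[C]_n) := (ct x *m N *m y) 0 0.
have hD : forall x y, qf N (x + y) = qf N x + qf N y + B x y + B y x.
  move=> x y; rewrite /qf /B ctD.
 rewrite !mulmxDl !mulmxDr !addmE.
  by rewrite -!addrA; congr (_ + _); rewrite [RHS]addrC addrA.
have hZ : forall (a : C) x y, B (a *: x) y = a^* * B x y.
  by move=> a x y; rewrite /B ctZ -!scalemxAl scalemE.
have hZ' : forall (a : C) x y, B x (a *: y) = a * B x y.
  by move=> a x y; rewrite /B -!scalemxAr scalemE.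
have hqZ : forall (a : C) x, qf N (a *: x) = 0 by move=> a x; rewrite h.
have h1 : forall x y, B x y + B y x = 0.
  by move=> x y; have := hD x y; rewrite !h !add0r => ->.
have h2 : forall x y, B x y = B y x.
  move=> x y; have := hD x ('i *: y); rewrite !h !add0r hZ' hZ conjCi mulNr.
  by move=> /esym /eqP; rewrite subr_eq0 => /eqP /(mulfI (neq0Ci _)).
apply/matrixP=> i j; rewrite mxE.
have := h1 (delta_mx j 0) (delta_mx i 0); rewrite h2 -mulr2n.
move/eqP; rewrite mulrn_eq0 /= => /eqP.
rewrite /B.
have -> : ct (delta_mx i (0 : 'I_1)) = delta_mx 0 i :> 'M[C]_(1, n).
  by apply/matrixP=> a b; rewrite !mxE rmorph_nat andbC.
by rewrite -rowE -colE !mxE.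
Qed.

Lemma psd_herm n (M : 'M[C]_n) : psd M -> ct M = M.
Proof.
move=> hM; apply/eqP; rewrite -subr_eq0; apply/eqP/qf0_eq0 => x.
by rewrite qfB qf_ct conj_Creal ?subrr // ger0_real.
Qed.


Section Schur.
Variable n : nat.
Implicit Types M : 'M[C]_(1 + n).

Definition alpha M : C := (ulsubmx M) 0 0.
Definition schur M : 'M[C]_n :=
  drsubmx M - (alpha M)^-1 *: (dlsubmx M *m ursubmx M).
Definition uvec M (x : 'cV[C]_n) : 'cV[C]_1 := - ((alpha M)^-1 *: (ursubmx M *m x)).
Definition y1 M (x : 'cV[C]_n) : 'cV[C]_(1 + n) := col_mx (uvec M x) x.

Lemma qf_e0 M : qf M (col_mx 1%:M 0) = alpha M.
Proof.
rewrite /qf ct_col ct1 ct0 -{1}(submxK M) mul_row_block mul_row_col.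
by rewrite !mul1mx !mul0mx !addr0 mulmx1 mulmx0 addr0.
Qed.

Lemma e0_neq0 : col_mx (1%:M : 'M[C]_1) (0 : 'cV[C]_n) != 0.
Proof.
rewrite col_mx_eq0 eqxx andbT; apply/eqP => /matrixP /(_ 0 0).
by rewrite !mxE /= => /eqP; rewrite oner_eq0.
Qed.

Lemma schur_mul M x : alpha M != 0 -> M *m y1 M x = col_mx 0 (schur M *m x).
Proof.
move=> a0; rewrite /y1 /uvec /schur -{1}(submxK M) mul_block_col.
rewrite [ulsubmx M]mx11_scalar -/(alpha M) mul_scalar_mx scalerN scalerA mulfV //.
rewrite scale1r addNr; congr col_mx.
by rewrite mulmxN -scalemxAr mulmxBl -scalemxAl mulmxA addrC.
Qed.

Lemma qf_y1 M x : alpha M != 0 -> qf M (y1 M x) = qf (schur M) x.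
Proof.
move=> a0; rewrite /qf -mulmxA schur_mul // /y1 ct_col mul_row_col mulmx0 add0r.
by rewrite mulmxA.
Qed.

Lemma det_schur M : alpha M != 0 -> \det M = alpha M * \det (schur M).
Proof.
move=> a0.
have ha : ulsubmx M *m ((alpha M)^-1 *: ursubmx M) = ursubmx M.
  by rewrite {1}[ulsubmx M]mx11_scalar -/(alpha M) mul_scalar_mx scalerA mulfV // scale1r.
have hfac : block_mx (ulsubmx M) 0 (dlsubmx M) (schur M) *m
              block_mx 1%:M ((alpha M)^-1 *: ursubmx M) 0 1%:M = M.
  rewrite mulmx_block !mulmx1 !mul0mx !mulmx0 !addr0 ha.
  by rewrite /schur -scalemxAr addrC subrK submxK.
by rewrite -{1}hfac det_mulmx det_lblock det_ublock !det1 mulr1 mulr1 det_mx11.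
Qed.

End Schur.

Lemma qf_orth m (M : 'M[C]_m) w y :
  ct M = M -> ct w *m (M *m y) = 0 -> qf M (w + y) = qf M w + qf M y.
Proof.
move=> hM h.
have h' : ct y *m M *m w = 0.
  have e : ct (ct w *m (M *m y)) = ct y *m M *m w by rewrite !ctM ctK hM.
  by rewrite -e h ct0.
by rewrite /qf ctD !mulmxDl !mulmxDr -[ct w *m M *m y]mulmxA h h' addr0 add0r addmE.

Qed.

Lemma det_mono n (M E : 'M[C]_n) :
  pd M -> psd E -> 0 < \det M /\ \det M <= \det (M + E).
Proof.
elim: n M E => [|n IH] M E pdM psdE.
  by rewrite !det_mx00 ltr01 lexx.
have step : forall M E : 'M[C]_(1 + n), pd M -> psd E ->
    0 < \det M /\ \det M <= \det (M + E).
  move=> {}M {}E {}pdM {}psdE.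
  have hM := psd_herm (pd_psd pdM).
  have pdM' := pdD pdM psdE.
  have hM' := psd_herm (pd_psd pdM').
  have a0 : 0 < alpha M by rewrite -qf_e0; apply: pdM; apply: e0_neq0.
  have a0' : 0 < alpha (M + E) by rewrite -qf_e0; apply: pdM'; apply: e0_neq0.
  have aa : alpha M <= alpha (M + E) by rewrite -!qf_e0 qfD lerDl.
  have an0 : alpha M != 0 by rewrite gt_eqF.
  have an0' : alpha (M + E) != 0 by rewrite gt_eqF.
  have pdS : pd (schur M).
    move=> x nz; rewrite -qf_y1 //; apply: pdM.
    by apply: contra nz; rewrite /y1 col_mx_eq0 => /andP [_ ->].
  have psdD : psd (schur (M + E) - schur M).
    move=> x; rewrite qfB subr_ge0 -qf_y1 // -qf_y1 //.
    have -> : y1 (M + E) x = col_mx (uvec (M + E) x - uvec M x) 0 + y1 M x.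
      by rewrite /y1 add_col_mx subrK add0r.
    rewrite qfD qf_orth //; last first.
      by rewrite schur_mul // ct_col ct0 mul_row_col mulmx0 mul0mx addr0.
    apply: le_trans (_ : qf M (col_mx (uvec (M + E) x - uvec M x) 0) + qf M (y1 M x) <= _).
      by rewrite lerDr; apply: pd_psd.
    by rewrite lerDl.
  have [dS dSS] := IH _ _ pdS psdD.
  rewrite addrC subrK in dSS.
  rewrite !det_schur //; split; first exact: mulr_gt0.
  by apply: ler_pM => //; apply: ltW.
exact: (step M E).
Qed.


Lemma psd_inv n (M : 'M[C]_n) : psd M -> M \in unitmx -> psd (invmx M).
Proof.
move=> hM hU u; have hH := psd_herm hM.
rewrite -[u](mulKVmx hU) /qf ctM hH -!mulmxA mulKmx // mulmxA; exact: hM.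
Qed.

Lemma pd1 n : pd (1%:M : 'M[C]_n).
Proof.
move=> x nz; rewrite /qf mulmx1 mxE.
have [i hi] : exists i, x i 0 != 0.
  apply/existsP; move: nz; apply: contraR; rewrite negb_exists => /forallP h.
  by apply/eqP/matrixP=> j k; rewrite ord1 mxE; apply/eqP; move: (h j); rewrite negbK.
rewrite (bigD1 i) //= ctE.
apply: lt_le_trans (_ : (x i 0)^* * x i 0 <= _).
  by rewrite mulrC mul_conjC_gt0.
rewrite lerDl sumr_ge0 // => j _; rewrite ctE mulrC mul_conjC_ge0 //.
Qed.

Lemma key_ineq n N (Q : 'M[C]_n) (b A : 'M[C]_(n,N)) :
  psd Q -> Q \in unitmx -> (ct A *m Q *m A) \in unitmx ->
  0 < \det (1%:M + ct (ct A *m b) *m invmx (ct A *m Q *m A) *m (ct A *m b)) /\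
  \det (1%:M + ct (ct A *m b) *m invmx (ct A *m Q *m A) *m (ct A *m b))
    <= \det (1%:M + ct b *m invmx Q *m b).
Proof.
move=> psdQ uQ uS.
have hQ := psd_herm psdQ.
have psdS := psd_cong A psdQ.
have hS := psd_herm psdS.
set S := ct A *m Q *m A in uS psdS hS *.
set Si := invmx S.
set Qi := invmx Q.
set Pi := A *m Si *m ct A.
have hPi : ct Pi = Pi by rewrite /Pi !ctM ctK /Si ct_inv hS mulmxA.
have hPQP : Pi *m Q *m Pi = Pi.
  have -> : Pi *m Q *m Pi = A *m (Si *m S *m Si) *m ct A by rewrite /Pi /S !mulmxA.
  by rewrite mulVmx // mul1mx.
have hX : ct (ct A *m b) *m Si *m (ct A *m b) = ct b *m Pi *m b.
  by rewrite ctM ctK /Pi !mulmxA.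
rewrite hX; clearbody Pi.
set Z := b - Q *m (Pi *m b).
have h1 : ct Z *m Qi = ct b *m Qi - ct b *m Pi.
  rewrite /Z ctB ctM [ct (Pi *m b)]ctM hPi hQ mulmxBl; congr (_ - _).
  by rewrite -[LHS]mulmxA /Qi mulmxV // mulmx1.
have h2 : (ct b *m Qi - ct b *m Pi) *m Q *m Pi = 0.
  have hPQP2 : Pi *m (Q *m Pi) = Pi by rewrite mulmxA hPQP.
  by rewrite !mulmxBl -!mulmxA /Qi mulKmx // hPQP2 subrr.
have hYX : ct b *m Qi *m b - ct b *m Pi *m b = ct Z *m Qi *m Z.
  by rewrite h1 /Z mulmxBr (mulmxA _ Q) mulmxA h2 mul0mx subr0 mulmxBl.
have psdX : psd (ct b *m Pi *m b).
  rewrite -hX; apply: psd_cong; exact: psd_inv.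
have psdYX : psd (ct b *m Qi *m b - ct b *m Pi *m b).
  rewrite hYX; apply: psd_cong; exact: psd_inv.
have pdM := pdD (@pd1 N) psdX.
have [d1 d2] := det_mono pdM psdYX.
split=> //; move: d2; rewrite -addrA (addrC (ct b *m Pi *m b)) subrK //.
Qed.


Lemma key_eq n N (Q : 'M[C]_n) (b : 'M[C]_(n,N)) :
  psd Q -> Q \in unitmx -> (Q + b *m ct b) \in unitmx ->
  (ct (invmx (Q + b *m ct b) *m b) *m Q *m (invmx (Q + b *m ct b) *m b)) \in unitmx ->
  ct (ct (invmx (Q + b *m ct b) *m b) *m b)
    *m invmx (ct (invmx (Q + b *m ct b) *m b) *m Q *m (invmx (Q + b *m ct b) *m b))
    *m (ct (invmx (Q + b *m ct b) *m b) *m b)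
  = ct b *m invmx Q *m b.
Proof.
move=> psdQ uQ uT uS.
have hQ := psd_herm psdQ.
have hQi : ct (invmx Q) = invmx Q by rewrite ct_inv hQ.
have psdc : psd (ct b *m invmx Q *m b) by apply: psd_cong; exact: psd_inv.
have hc := psd_herm psdc.
set c := ct b *m invmx Q *m b in psdc hc *.
have [_ dJ] := det_mono (@pd1 N) psdc.
rewrite det1 in dJ.
have uJ : (1%:M + c) \in unitmx.
  by rewrite unitmxE unitfE; apply: lt0r_neq0; apply: lt_le_trans dJ.
have hJ : ct (1%:M + c) = 1%:M + c by rewrite ctD ct1 hc.
have hT : (Q + b *m ct b) *m (invmx Q *m b) = b *m (1%:M + c).
  rewrite mulmxDl mulKVmx // mulmxDr mulmx1 /c -!mulmxA //.
set J := 1%:M + c in uJ hJ hT *.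
set T := Q + b *m ct b in uT hT uS *.
have eA : invmx T *m b = invmx Q *m b *m invmx J.
  have e1 : b = T *m (invmx Q *m b *m invmx J).
    by rewrite mulmxA hT -mulmxA mulmxV // mulmx1.
  by rewrite {1}e1 mulKmx.
rewrite eA in uS *.
have hJi : ct (invmx J) = invmx J by rewrite ct_inv hJ.
have eD : ct (invmx Q *m b *m invmx J) *m b = invmx J *m c.
  by rewrite !ctM hJi hQi /c !mulmxA.
have eS : ct (invmx Q *m b *m invmx J) *m Q *m (invmx Q *m b *m invmx J)
          = invmx J *m c *m invmx J.
  rewrite !ctM hJi hQi /c !mulmxA.
  by rewrite -[invmx J *m ct b *m invmx Q *m Q]mulmxA mulVmx // mulmx1.
rewrite eD eS in uS *.
rewrite ctM hJi hc.
set Sg := invmx J *m c *m invmx J in uS *.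
have ec : c = J *m Sg *m J.
  by rewrite /Sg !mulmxA mulmxV // mul1mx -mulmxA mulVmx // mulmx1.
clearbody Sg J.
rewrite [in LHS]ec -!mulmxA (mulKVmx uJ) (mulKmx uJ) (mulKVmx uS).
by rewrite mulmxA -ec.
Qed.

End LinAlg.

Section Diag.
Variable C : numClosedFieldType.

Lemma ct_mxcol (M : nat) (p_ : 'I_M -> nat) (X : forall i, 'M[C]_(p_ i, 1)) :
  ct (\mxcol_i X i) = \mxrow_i ct (X i).
Proof. by apply/matrixP => a b; rewrite !mxE. Qed.

Lemma psd_mxdiag (M : nat) (p_ : 'I_M -> nat) (B_ : forall i, 'M[C]_(p_ i)) :
  (forall i, psd (B_ i)) -> psd (\mxdiag_i B_ i).
Proof.
move=> h x; rewrite -(submxcolK x) /qf ct_mxcol -mulmxA.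
have -> : \mxdiag_i B_ i *m \mxcol_i submxcol x i = \mxcol_i (B_ i *m submxcol x i).
  rewrite /mxdiag mul_mxblock_mxrow; apply: eq_mxcol => i.
  rewrite (bigD1 i) //= eqxx conform_mx_id big1 ?addr0 // => j.
  by rewrite eq_sym => /negbTE ->; rewrite mul0mx.
rewrite mul_mxrow_mxcol summxE; apply: sumr_ge0 => i _.
by rewrite mulmxA; exact: h.
Qed.

End Diag.

Section ReIm.
Variable R : realType.
Implicit Types x y : R[i].
Lemma ReD x y : complex.Re (x + y) = complex.Re x + complex.Re y. Proof. by case: x; case: y. Qed.
Lemma ImD x y : complex.Im (x + y) = complex.Im x + complex.Im y. Proof. by case: x; case: y. Qed.
Lemma ReN x : complex.Re (- x) = - complex.Re x. Proof. by case: x. Qed.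
Lemma ImN x : complex.Im (- x) = - complex.Im x. Proof. by case: x. Qed.
Lemma ReM x y : complex.Re (x * y) = complex.Re x * complex.Re y - complex.Im x * complex.Im y.
Proof. by case: x; case: y. Qed.
Lemma ImM x y : complex.Im (x * y) = complex.Re x * complex.Im y + complex.Im x * complex.Re y.
Proof. by case: x => a b; case: y => c e /=. Qed.
Lemma ReJ x : complex.Re (x^*) = complex.Re x. Proof. by case: x. Qed.
Lemma ImJ x : complex.Im (x^*) = - complex.Im x. Proof. by case: x. Qed.
End ReIm.

Section RealL.
Context {d : measure_display} {Omega : measurableType d} {R : realType}
        (P : probability Omega R).
Local Notation ri f := (P.-integrable setT (EFin \o f)).

Lemma ri_add (f g : Omega -> R) : ri f -> ri g -> ri (fun w => f w + g w).
Proof.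
by move=> hf hg; apply: eq_integrable (integrableD measurableT hf hg) => // w _.
Qed.

Lemma ri_scale k (f : Omega -> R) : ri f -> ri (fun w => k * f w).
Proof.
by move=> hf; apply: eq_integrable (integrableZl measurableT k hf) => // w _.
Qed.

Lemma ri_opp (f : Omega -> R) : ri f -> ri (fun w => - f w).
Proof.
move=> hf; apply: eq_integrable (ri_scale (-1) hf) => // w _ /=.
by rewrite mulN1r.
Qed.

Lemma ri_cst k : ri (fun _ : Omega => k).
Proof. exact: finite_measure_integrable_cst. Qed.

Lemma ri_mul (f g : Omega -> R) : sq_integrable P f -> sq_integrable P g ->
  ri (fun w => f w * g w).
Proof.
move=> [mf sf] [mg sg].
apply: (le_integrable measurableT _ _ (ri_add sf sg)).
  by apply/measurable_EFinP; exact: measurable_funM.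
move=> w _; rewrite /comp !abse_EFin lee_fin normrM.
rewrite [X in _ <= X]ger0_norm ?addr_ge0 ?sqr_ge0 //.
rewrite -[f w ^+ 2](real_normK (num_real _)) -[g w ^+ 2](real_normK (num_real _)).
have := normr_ge0 (f w); have := normr_ge0 (g w).
move: `|f w| `|g w| => a b ha hb; nra.
Qed.

Lemma sq_cst1 : sq_integrable P (fun _ : Omega => 1).
Proof. split; first exact: measurable_cst. exact: (ri_cst (1 ^+ 2)). Qed.

Lemma ri_sq (f : Omega -> R) : sq_integrable P f -> ri f.
Proof.
move=> hf; apply: eq_integrable (ri_mul hf sq_cst1) => // w _ /=.
by rewrite mulr1.
Qed.

Lemma sq_opp (f : Omega -> R) : sq_integrable P f -> sq_integrable P (fun w => - f w).
Proof.
move=> [mf sf]; split; first exact: measurableT_comp.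
by apply: eq_integrable sf => // w _; rewrite /= sqrrN.
Qed.

Definition fE (f : Omega -> R) : R := fine ('E_P[f])%E.

Lemma E_fin (f : Omega -> R) : ri f -> ('E_P[f] = (fE f)%:E)%E.
Proof. by move=> hf; rewrite /fE fineK // expectation_fin_num //; apply/Lfun1_integrable. Qed.

Lemma fE_add (f g : Omega -> R) : ri f -> ri g ->
  fE (fun w => f w + g w) = fE f + fE g.
Proof.
move=> hf hg; rewrite /fE.
have -> : ('E_P[fun w => (f w + g w)%R] = 'E_P[f] + 'E_P[g])%E.
  by apply: expectationD; apply/Lfun1_integrable.
by rewrite (E_fin hf) (E_fin hg).
Qed.

Lemma fE_scale k (f : Omega -> R) : ri f -> fE (fun w => k * f w) = k * fE f.
Proof.
move=> hf; rewrite /fE.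
have -> : ('E_P[fun w => (k * f w)%R] = k%:E * 'E_P[f])%E.
  have L1 : f \in Lfun P 1 by apply/Lfun1_integrable.
  have -> : (fun w => k * f w) = (fun x => f x * k) by apply/funext => w; rewrite mulrC.
  by have := expectationZl k L1; rewrite /GRing.mulr_fun.
by rewrite (E_fin hf).
Qed.

Lemma fE_opp (f : Omega -> R) : ri f -> fE (fun w => - f w) = - fE f.
Proof.
move=> hf; rewrite -mulN1r -fE_scale //; congr fE.
by apply/funext => w; rewrite mulN1r.
Qed.

Lemma fE_cst k : fE (fun _ => k) = k.
Proof. by rewrite /fE (expectation_cst P k). Qed.

Lemma fE_ge0 (f : Omega -> R) : (forall w, 0 <= f w) -> 0 <= fE f.
Proof. by move=> h; apply: fine_ge0; apply: expectation_ge0. Qed.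

End RealL.

Section CplxL.
Context {d : measure_display} {Omega : measurableType d} {R : realType}
        (P : probability Omega R).
Local Notation ri f := (P.-integrable setT (EFin \o f)).
Local Notation Re := complex.Re.
Local Notation Im := complex.Im.

Definition cint (X : Omega -> R[i]) :=
  ri (fun w => Re (X w)) /\ ri (fun w => Im (X w)).

Lemma ri_ext (f g : Omega -> R) : f =1 g -> ri f -> ri g.
Proof. by move=> /funext ->. Qed.

Lemma fE_ext (f g : Omega -> R) : f =1 g -> fE P f = fE P g.
Proof. by move=> /funext ->. Qed.

Lemma fE_lin2 a b (f g : Omega -> R) : ri f -> ri g ->
  fE P (fun w => a * f w + b * g w) = a * fE P f + b * fE P g.
Proof.
move=> hf hg; rewrite fE_add ?fE_scale //; exact: ri_scale.
Qed.

Lemma ri_lin2 a b (f g : Omega -> R) : ri f -> ri g ->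
  ri (fun w => a * f w + b * g w).
Proof. by move=> hf hg; apply: ri_add; apply: ri_scale. Qed.

Lemma cint_add X Y : cint X -> cint Y -> cint (fun w => X w + Y w).
Proof.
move=> [hXr hXi] [hYr hYi]; split.
  by apply: ri_ext (ri_add hXr hYr) => w; rewrite ReD.
by apply: ri_ext (ri_add hXi hYi) => w; rewrite ImD.
Qed.

Lemma cint_scale a X : cint X -> cint (fun w => a * X w).
Proof.
move=> [hr hi]; split.
  apply: ri_ext (ri_lin2 (Re a) (- Im a) hr hi) => w.
  by rewrite ReM mulNr.
by apply: ri_ext (ri_lin2 (Re a) (Im a) hi hr) => w; rewrite ImM.
Qed.

Lemma cint_conj X : cint X -> cint (fun w => (X w)^*).
Proof.
move=> [hr hi]; split; first by apply: ri_ext hr => w; rewrite ReJ.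
by apply: ri_ext (ri_opp hi) => w; rewrite ImJ.
Qed.

Lemma cint_cst c : cint (fun _ => c).
Proof. split; exact: ri_cst. Qed.

Lemma cint_sum I (r : seq I) (p : pred I) (X : I -> Omega -> R[i]) :
  (forall i, cint (X i)) -> cint (fun w => \sum_(i <- r | p i) X i w).
Proof.
move=> h; elim: r => [|i r IH].
  by apply: (@eq_ind _ (fun _ => 0)); [exact: cint_cst|apply/funext => w; rewrite big_nil].
case Pi: (p i).
  apply: (@eq_ind _ (fun w => X i w + \sum_(j <- r | p j) X j w)).
    exact: cint_add.
  by apply/funext => w; rewrite big_cons Pi.
by apply: (eq_ind _ _ IH); apply/funext => w; rewrite big_cons Pi.
Qed.

Lemma csq_conj X : csq_integrable P X -> csq_integrable P (fun w => (X w)^*).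
Proof.
move=> [hr hi]; split.
  by apply: (eq_ind _ _ hr); apply/funext => w; rewrite ReJ.
by apply: (eq_ind _ _ (sq_opp hi)); apply/funext => w; rewrite ImJ.
Qed.

Lemma cint_mul X Y : csq_integrable P X -> csq_integrable P Y ->
  cint (fun w => X w * Y w).
Proof.
move=> [hXr hXi] [hYr hYi]; split.
  apply: ri_ext (ri_add (ri_mul hXr hYr) (ri_opp (ri_mul hXi hYi))) => w.
  by rewrite ReM.
apply: ri_ext (ri_add (ri_mul hXr hYi) (ri_mul hXi hYr)) => w.
by rewrite ImM.
Qed.

Lemma cint_csq X : csq_integrable P X -> cint X.
Proof. by move=> [hr hi]; split; apply: ri_sq. Qed.

Lemma cexpectE X : cexpect P X = Complex (fE P (fun w => Re (X w))) (fE P (fun w => Im (X w))).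
Proof. by []. Qed.

Lemma cE_add X Y : cint X -> cint Y ->
  cexpect P (fun w => X w + Y w) = cexpect P X + cexpect P Y.
Proof.
move=> [hXr hXi] [hYr hYi]; rewrite !cexpectE /=; congr Complex.
  by rewrite -fE_add //; apply: fE_ext => w; rewrite ReD.
by rewrite -fE_add //; apply: fE_ext => w; rewrite ImD.
Qed.

Lemma cE_scale a X : cint X -> cexpect P (fun w => a * X w) = a * cexpect P X.
Proof.
move=> [hr hi]; rewrite !cexpectE; case: a => a1 a2 /=; congr Complex.
  rewrite -mulNr -fE_lin2 //; apply: fE_ext => w.
  by rewrite ReM /= mulNr.
rewrite addrC -fE_lin2 //; apply: fE_ext => w.
by rewrite ImM /= addrC.
Qed.

Lemma cE_conj X : cint X -> cexpect P (fun w => (X w)^*) = (cexpect P X)^*.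
Proof.
move=> [hr hi]; rewrite !cexpectE /=; congr Complex.
  by apply: fE_ext => w; rewrite ReJ.
by rewrite -fE_opp //; apply: fE_ext => w; rewrite ImJ.
Qed.

Lemma cE_cst c : cexpect P (fun _ => c) = c.
Proof. by rewrite cexpectE !fE_cst; case: c. Qed.

Lemma cE_sum I (r : seq I) (p : pred I) (X : I -> Omega -> R[i]) :
  (forall i, cint (X i)) ->
  cexpect P (fun w => \sum_(i <- r | p i) X i w) = \sum_(i <- r | p i) cexpect P (X i).
Proof.
move=> h; elim: r => [|i r IH].
  have -> : (fun w => \sum_(i <- [::] | p i) X i w) = (fun _ => 0) by apply/funext => w; rewrite big_nil.
  by rewrite cE_cst big_nil.
rewrite big_cons; case Pi: (p i).
  rewrite -IH -cE_add //; last exact: cint_sum.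
  by congr cexpect; apply/funext => w; rewrite big_cons Pi.
by rewrite -IH; congr cexpect; apply/funext => w; rewrite big_cons Pi.
Qed.

Lemma cE_ge0 X : (forall w, 0 <= X w) -> 0 <= cexpect P X.
Proof.
move=> h; rewrite cexpectE lecE /=.
have -> : fE P (fun w => Im (X w)) = 0.
  rewrite -(fE_cst P 0); apply: fE_ext => w.
  by have := h w; rewrite lecE => /andP [/eqP -> _].
rewrite eqxx /=; apply: fE_ge0 => w.
by have := h w; rewrite lecE => /andP [_ ].
Qed.

End CplxL.

Section MatL.
Context {d : measure_display} {Omega : measurableType d} {R : realType}
        (P : probability Omega R).
Local Notation C := (R[i]).

Definition mint m n (Z : Omega -> 'M[C]_(m,n)) :=
  forall i j, cint P (fun w => Z w i j).

Lemma mexpectE m n (Z : Omega -> 'M[C]_(m,n)) i j :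
  mexpect P Z i j = cexpect P (fun w => Z w i j).
Proof. by rewrite mxE. Qed.

Lemma bilinE p m n q (U : 'M[C]_(p,m)) (W : 'M[C]_(n,q)) (A : 'M[C]_(m,n)) i j :
  (U *m A *m W) i j = \sum_l \sum_k (U i k * W l j) * A k l.
Proof.
rewrite mxE; apply: eq_bigr => l _; rewrite mxE big_distrl /=.
by apply: eq_bigr => k _; rewrite mulrAC.
Qed.

Lemma mint_bilin p m n q (U : 'M[C]_(p,m)) (W : 'M[C]_(n,q)) Z :
  mint Z -> mint (fun w => U *m Z w *m W).
Proof.
move=> hZ i j.
apply: (@eq_ind _ (fun w => \sum_l \sum_k (U i k * W l j) * Z w k l)).
  apply: cint_sum => l; apply: cint_sum => k; apply: cint_scale; exact: hZ.
by apply/funext => w; rewrite bilinE.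
Qed.

Lemma mE_bilin p m n q (U : 'M[C]_(p,m)) (W : 'M[C]_(n,q)) Z :
  mint Z -> mexpect P (fun w => U *m Z w *m W) = U *m mexpect P Z *m W.
Proof.
move=> hZ; apply/matrixP => i j; rewrite mexpectE.
transitivity (cexpect P (fun w => \sum_l \sum_k (U i k * W l j) * Z w k l)).
  by congr cexpect; apply/funext => w; rewrite bilinE.
rewrite cE_sum; last first.
  move=> l; apply: cint_sum => k; apply: cint_scale; exact: hZ.
rewrite bilinE; apply: eq_bigr => l _.
rewrite cE_sum; last by move=> k; apply: cint_scale; exact: hZ.
by apply: eq_bigr => k _; rewrite cE_scale // mexpectE.
Qed.

Lemma mint_ct m n (Z : Omega -> 'M[C]_(m,n)) : mint Z -> mint (fun w => ct (Z w)).
Proof.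
move=> hZ i j; apply: (@eq_ind _ (fun w => (Z w j i)^*)).
  exact: cint_conj.
by apply/funext => w; rewrite ctE.
Qed.

Lemma mE_ct m n (Z : Omega -> 'M[C]_(m,n)) :
  mint Z -> mexpect P (fun w => ct (Z w)) = ct (mexpect P Z).
Proof.
move=> hZ; apply/matrixP => i j; rewrite mexpectE ctE mexpectE -cE_conj //.
by congr cexpect; apply/funext => w; rewrite ctE.
Qed.

Lemma mint_add m n (A B : Omega -> 'M[C]_(m,n)) :
  mint A -> mint B -> mint (fun w => A w + B w).
Proof.
move=> hA hB i j; apply: (@eq_ind _ (fun w => A w i j + B w i j)).
  exact: cint_add.
by apply/funext => w; rewrite addmE.
Qed.

Lemma mE_add m n (A B : Omega -> 'M[C]_(m,n)) :
  mint A -> mint B -> mexpect P (fun w => A w + B w) = mexpect P A + mexpect P B.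
Proof.
move=> hA hB; apply/matrixP => i j; rewrite addmE !mexpectE -cE_add //.
by congr cexpect; apply/funext => w; rewrite addmE.
Qed.

Lemma mint_opp m n (A : Omega -> 'M[C]_(m,n)) : mint A -> mint (fun w => - A w).
Proof.
move=> hA i j; apply: (@eq_ind _ (fun w => -1 * A w i j)).
  exact: cint_scale.
by apply/funext => w; rewrite oppmE mulN1r.
Qed.

Lemma mE_opp m n (A : Omega -> 'M[C]_(m,n)) :
  mint A -> mexpect P (fun w => - A w) = - mexpect P A.
Proof.
move=> hA; apply/matrixP => i j; rewrite oppmE !mexpectE -mulN1r -cE_scale //.
by congr cexpect; apply/funext => w; rewrite oppmE mulN1r.
Qed.

Lemma mint_cst m n (A : 'M[C]_(m,n)) : mint (fun _ => A).
Proof. by move=> i j; exact: cint_cst. Qed.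

Lemma mE_cst m n (A : 'M[C]_(m,n)) : mexpect P (fun _ => A) = A.
Proof. by apply/matrixP => i j; rewrite mexpectE cE_cst. Qed.

Lemma msq_mint m n (Z : Omega -> 'M[C]_(m,n)) : mx_sq_integrable P Z -> mint Z.
Proof. by move=> h i j; apply: cint_csq. Qed.

Lemma msq_ct m n (Z : Omega -> 'M[C]_(m,n)) :
  mx_sq_integrable P Z -> mx_sq_integrable P (fun w => ct (Z w)).
Proof.
move=> h i j; apply: (@eq_ind _ (fun w => (Z w j i)^*)).
  exact: csq_conj.
by apply/funext => w; rewrite ctE.
Qed.

Lemma mint_mul3 m p q n (Z1 : Omega -> 'M[C]_(m,p)) (W : 'M[C]_(p,q))
    (Z2 : Omega -> 'M[C]_(q,n)) :
  mx_sq_integrable P Z1 -> mx_sq_integrable P Z2 ->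
  mint (fun w => Z1 w *m W *m Z2 w).
Proof.
move=> h1 h2 i j.
apply: (@eq_ind _ (fun w => \sum_l \sum_k W k l * (Z1 w i k * Z2 w l j))).
  apply: cint_sum => l; apply: cint_sum => k; apply: cint_scale; exact: cint_mul.
apply/funext => w; rewrite mxE; apply: eq_bigr => l _; rewrite mxE big_distrl /=.
apply: eq_bigr => k _; by rewrite mulrCA mulrA.
Qed.

Lemma qf_mE n (Z : Omega -> 'M[C]_n) x :
  mint Z -> qf (mexpect P Z) x = cexpect P (fun w => qf (Z w) x).
Proof. by move=> hZ; rewrite /qf -mE_bilin // mexpectE. Qed.

End MatL.

Lemma ctmxE (R : realType) m n (A : 'M[R[i]]_(m,n)) : ctmx A = ct A.
Proof. by []. Qed.

Lemma qfZ (C : numClosedFieldType) n (a : C) (M : 'M[C]_n) x : qf (a *: M) x = a * qf M x.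
Proof. by rewrite /qf -scalemxAr -scalemxAl scalemE. Qed.

Lemma qf_sum (C : numClosedFieldType) n I (r : seq I) (p : pred I) (M : I -> 'M[C]_n) x :
  qf (\sum_(i <- r | p i) M i) x = \sum_(i <- r | p i) qf (M i) x.
Proof. by rewrite /qf mulmx_sumr mulmx_suml summxE. Qed.

Lemma psd_AAt (C : numClosedFieldType) m n (A : 'M[C]_(m,n)) : psd (A *m ct A).
Proof.
have -> : A *m ct A = ct (ct A) *m 1%:M *m ct A by rewrite ctK mulmx1.
apply: psd_cong; apply: pd_psd; exact: pd1.
Qed.

Lemma psd_AtA (C : numClosedFieldType) m n (A : 'M[C]_(m,n)) : psd (ct A *m A).
Proof. by have := psd_AAt (ct A); rewrite ctK. Qed.

Section Gen.
Variable C : numClosedFieldType.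

Lemma qf_BBt n p (B : 'M[C]_(n,p)) (x : 'cV[C]_n) : qf (B *m ct B) x = (ct (ct B *m x) *m (ct B *m x)) 0 0.
Proof. by rewrite /qf ctM ctK !mulmxA. Qed.

Lemma h2gen n p N (E : 'M[C]_(n,p)) (Fk : 'M[C]_(p,N)) (x : 'cV[C]_n) :
  ct x *m E *m (Fk *m (ct (E *m Fk) *m x)) = ct (ct (E *m Fk) *m x) *m (ct (E *m Fk) *m x).
Proof. by rewrite !ctM !ctK !mulmxA. Qed.

Lemma h3gen n p N (E : 'M[C]_(n,p)) (Fk : 'M[C]_(p,N)) (x : 'cV[C]_n) :
  ct (ct (E *m Fk) *m x) *m ct Fk *m ct E *m x = ct (ct (E *m Fk) *m x) *m (ct (E *m Fk) *m x).
Proof. by rewrite !ctM !ctK !mulmxA. Qed.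

Lemma cov_expand n N (Fk : 'M[C]_N) (Gw : 'M[C]_(n,N)) (x : 'cV[C]_n) (z : 'cV[C]_N) :
  ct (ct Fk *m ct Gw *m x - z) *m (ct Fk *m ct Gw *m x - z) =
  ct x *m (Gw *m (Fk *m ct Fk) *m ct Gw) *m x - ct x *m Gw *m (Fk *m z)
  - (ct z *m ct Fk *m ct Gw *m x - ct z *m z).
Proof. by rewrite ctB mulmxBl !mulmxBr !ctM !ctK !mulmxA. Qed.


Lemma sum_gen n p N I (r : seq I) (Pr : pred I) (A : 'M[C]_(n,N)) (E : I -> 'M[C]_(n,p)) (B : 'M[C]_(p,N)) :
  \sum_(i <- r | Pr i) (ct A *m E i *m B) = ct A *m (\sum_(i <- r | Pr i) E i) *m B.
Proof. by rewrite mulmx_sumr mulmx_suml. Qed.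

Lemma sig_gen n N (A : 'M[C]_(n,N)) (Es : 'M[C]_n) (E : 'M[C]_(n,N)) (Fk : 'M[C]_N) (s : C) (S : 'M[C]_n) :
  ct A *m Es *m A - (ct A *m E *m Fk) *m ct (ct A *m E *m Fk) + s *: (ct A *m S *m A)
  = ct A *m (Es - E *m (Fk *m ct Fk) *m ct E + s *: S) *m A.
Proof.
rewrite mulmxDr mulmxBr mulmxDl mulmxBl -scalemxAr -scalemxAl.
by rewrite !ctM !ctK !mulmxA.
Qed.

Lemma opt_gen n N (E : 'M[C]_(n,N)) (Fk : 'M[C]_N) (Qi : 'M[C]_n) :
  ct Fk *m ct E *m Qi *m E *m Fk = ct (E *m Fk) *m Qi *m (E *m Fk).
Proof. by rewrite ctM !mulmxA. Qed.

Lemma hb_gen n N (E : 'M[C]_(n,N)) (Fk : 'M[C]_N) :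
  E *m (Fk *m ct Fk) *m ct E = (E *m Fk) *m ct (E *m Fk).
Proof. by rewrite ctM !mulmxA. Qed.

End Gen.

Section Main.
Context {d : measure_display} {Omega : measurableType d} {R : realType}
  (P : probability Omega R) (M K L N : nat)
  (H : 'I_M -> 'I_K -> Omega -> 'M[R[i]]_(L, N))
  (V : 'I_M -> 'I_K -> Omega -> 'M[R[i]]_(L, N))
  (F : 'I_K -> 'M[R[i]]_N) (sigma2 : R) (k : 'I_K).

Hypothesis hs : 0 < sigma2.
Hypothesis hV : forall (m : 'I_M) (l : 'I_K), mx_sq_integrable P (V m l).
Hypothesis hG : forall l : 'I_K, mx_sq_integrable P (Gmx H V k l).

Local Notation G := (Gmx H V k).
Local Notation EG := (EG P H V k).
Local Notation b := (EG *m F k).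
Local Notation Q := (\sum_(l < K) EGFG P H V F k l - EG *m Fbar F k *m ctmx EG
     + sigma2C sigma2 *: Smx P V k).

Lemma hb : EG *m Fbar F k *m ctmx EG = b *m ct b.
Proof. by rewrite /Fbar ctM !mulmxA. Qed.

Lemma psd_EGFG l : psd (EGFG P H V F k l).
Proof.
move=> x; rewrite /EGFG qf_mE; last by apply: mint_mul3 => //; exact: msq_ct.
apply: cE_ge0 => w.
have -> : G l w *m Fbar F l *m ctmx (G l w) = ct (ct (G l w)) *m (F l *m ct (F l)) *m ct (G l w).
  by rewrite ctK.
apply: psd_cong; exact: psd_AAt.
Qed.

Lemma psd_S : psd (Smx P V k).
Proof.
apply: psd_mxdiag => m u.
have hm : mint P (fun w => ct (V m k w) *m V m k w).
  apply: (@eq_ind _ (fun w => ct (V m k w) *m 1%:M *m V m k w)).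
    by apply: mint_mul3 => //; exact: msq_ct.
  by apply/funext => w; rewrite mulmx1.
rewrite qf_mE //; apply: cE_ge0 => w; exact: psd_AtA.
Qed.

Lemma psd_cov : psd (EGFG P H V F k k - b *m ct b).
Proof.
move=> x; rewrite qfB (qf_BBt b x).
have hGk := hG k.
have mG : mint P (G k) := msq_mint hGk.
have mGt : mint P (fun w => ct (G k w)) := mint_ct mG.
have m1 : mint P (fun w => G k w *m Fbar F k *m ct (G k w)).
  by apply: mint_mul3 => //; exact: msq_ct.
have e2 := h2gen EG (F k) x.
have e3 := h3gen EG (F k) x.
move: (ct b *m x) e2 e3 => z e2 e3.
pose T1 := fun w => ct x *m (G k w *m Fbar F k *m ct (G k w)) *m x.
pose T2 := fun w => ct x *m G k w *m (F k *m z).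
pose T3 := fun w => (ct z *m ct (F k)) *m ct (G k w) *m x.
have i1 : mint P T1 by exact: mint_bilin.
have i2 : mint P T2 by exact: mint_bilin.
have i3 : mint P T3 by exact: mint_bilin.
have i4 : mint P (fun _ : Omega => ct z *m z) := mint_cst _ _.
have h1 : mexpect P T1 = ct x *m EGFG P H V F k k *m x by rewrite /T1 (mE_bilin _ _ m1).
have h2 : mexpect P T2 = ct z *m z.
  rewrite /T2 (mE_bilin _ _ mG); exact: e2.
have h3 : mexpect P T3 = ct z *m z.
  rewrite /T3 (mE_bilin _ _ mGt) (mE_ct mG); exact: e3.
have hE0 : (fun w => ct (ct (F k) *m ct (G k w) *m x - z) *m (ct (F k) *m ct (G k w) *m x - z))
         = (fun w => T1 w - T2 w - (T3 w - ct z *m z)).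
  by apply/funext => w; rewrite /T1 /T2 /T3; exact: cov_expand.
clearbody T1 T2 T3.
have hL : mexpect P (fun w => T1 w - T2 w - (T3 w - ct z *m z))
          = ct x *m EGFG P H V F k k *m x - ct z *m z.
  rewrite (mE_add (mint_add i1 (mint_opp i2)) (mint_opp (mint_add i3 (mint_opp i4)))).
  rewrite (mE_add i1 (mint_opp i2)) (mE_opp i2) (mE_opp (mint_add i3 (mint_opp i4))).
  rewrite (mE_add i3 (mint_opp i4)) (mE_opp i4) mE_cst h1 h2 h3.
  by rewrite subrr subr0.
have hge : 0 <= (mexpect P (fun w => ct (ct (F k) *m ct (G k w) *m x - z)
                    *m (ct (F k) *m ct (G k w) *m x - z))) 0 0.
  rewrite mexpectE; apply: cE_ge0 => w; rewrite -(mulmx1 (ct _)).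
  exact: (pd_psd (@pd1 _ N)).
by rewrite hE0 hL addmE oppmE in hge.
Qed.



Lemma sig_ge0 : 0 <= sigma2C sigma2.
Proof. by rewrite /sigma2C lecE /= eqxx ltW. Qed.

Lemma psdQ : psd Q.
Proof.
move=> x; rewrite qfD qfB qf_sum (bigD1 k) //= qfZ.
have c1 := psd_cov x; rewrite qfB in c1.
have c2 : 0 <= \sum_(i < K | i != k) qf (EGFG P H V F k i) x.
  by apply: sumr_ge0 => l _; exact: psd_EGFG.
have c3 : 0 <= sigma2C sigma2 * qf (Smx P V k) x by apply: mulr_ge0; [exact: sig_ge0|exact: psd_S].
rewrite /Fbar hb_gen [X in X + _]addrAC; exact: addr_ge0 (addr_ge0 c1 c2) c3.
Qed.


Variables (tau_p tau_c : nat).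
Hypothesis htc : (tau_p < tau_c)%N.

Lemma prelog_ge0 : 0 <= prelog (R:=R) tau_p tau_c.
Proof.
rewrite /prelog subr_ge0 ler_pdivrMr ?ltr0n ?(leq_ltn_trans _ htc) //.
by rewrite mul1r ler_nat ltnW.
Qed.

Lemma log_mono (x y : R[i]) : 0 < x -> x <= y ->
  prelog tau_p tau_c * log2 (complex.Re x) <= prelog tau_p tau_c * log2 (complex.Re y).
Proof.
move=> x0 xy; apply: ler_wpM2l; first exact: prelog_ge0.
rewrite /log2; apply: ler_wpM2r.
  by rewrite invr_ge0 ltW // ln_gt0 // ltr1n.
move: x0 xy; rewrite ltcE lecE => /andP [_ hx] /andP [_ hxy].
by rewrite ler_ln // posrE // (lt_le_trans hx hxy).
Qed.

Lemma main_res :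
  (\sum_(l < K) EGFG P H V F k l + sigma2C sigma2 *: Smx P V k) \in unitmx ->
  Q \in unitmx ->
  Sigmx P H V F sigma2 k (Aopt P H V F sigma2 k) \in unitmx ->
  (forall A : 'M[R[i]]_(\sum_(m < M) N, N),
      Sigmx P H V F sigma2 k A \in unitmx ->
      SE P H V F sigma2 tau_p tau_c k A
        <= SE P H V F sigma2 tau_p tau_c k (Aopt P H V F sigma2 k)) /\
  SE P H V F sigma2 tau_p tau_c k (Aopt P H V F sigma2 k)
    = SEopt P H V F sigma2 tau_p tau_c k.
Proof.
move=> uT uQ uS.
have pQ := psdQ.
have eT : \sum_(l < K) EGFG P H V F k l + sigma2C sigma2 *: Smx P V k = Q + b *m ct b.
  by rewrite hb addrAC subrK.
have eSig : forall A, Sigmx P H V F sigma2 k A = ct A *m Q *m A.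
  by move=> A; rewrite /Sigmx /Dmx /Fbar !ctmxE sum_gen sig_gen.
have eD : forall A, Dmx P H V F k A = ct A *m b.
  by move=> A; rewrite /Dmx ctmxE -mulmxA.
have eA : Aopt P H V F sigma2 k = invmx (Q + b *m ct b) *m b.
  by rewrite /Aopt eT -mulmxA.
have eOpt : SEopt P H V F sigma2 tau_p tau_c k
   = prelog tau_p tau_c * log2 (complex.Re (\det (1%:M + ct b *m invmx Q *m b))).
  by rewrite /SEopt !ctmxE opt_gen.
have eSE : forall A, SE P H V F sigma2 tau_p tau_c k A =
   prelog tau_p tau_c * log2 (complex.Re (\det (1%:M +
     ct (ct A *m b) *m invmx (ct A *m Q *m A) *m (ct A *m b)))).
  by move=> A; rewrite /SE eD eSig ctmxE; reflexivity.
have eq_opt : SE P H V F sigma2 tau_p tau_c k (Aopt P H V F sigma2 k)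
    = SEopt P H V F sigma2 tau_p tau_c k.
  rewrite eSE eOpt eA (key_eq pQ uQ); first reflexivity.
    rewrite -eT; exact: uT.
  rewrite -eA -eSig; exact: uS.
split; last exact: eq_opt.
move=> A uA.
rewrite eq_opt eOpt eSE.
have uA' : (ct A *m Q *m A) \in unitmx by rewrite -eSig; exact: uA.
have [h1 h2] := key_ineq b pQ uQ uA'.
exact: (log_mono h1 h2).
Qed.

End Main.

Theorem corollary2 (d : measure_display) (Omega : measurableType d) (R : realType)
  (P : probability Omega R) (M K L N : nat)
  (H : 'I_M -> 'I_K -> Omega -> 'M[R[i]]_(L, N))
  (V : 'I_M -> 'I_K -> Omega -> 'M[R[i]]_(L, N))
  (F : 'I_K -> 'M[R[i]]_N) (sigma2 : R) (tau_p tau_c : nat) (k : 'I_K) :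
  0 < sigma2 ->
  (0 < tau_p)%N -> (tau_p < tau_c)%N ->
  (forall (m : 'I_M) (l : 'I_K), mx_sq_integrable P (H m l)) ->
  (forall (m : 'I_M) (l : 'I_K), mx_sq_integrable P (V m l)) ->
  (forall l : 'I_K, mx_sq_integrable P (Gmx H V k l)) ->
  (\sum_(l < K) EGFG P H V F k l + sigma2C sigma2 *: Smx P V k) \in unitmx ->
  (\sum_(l < K) EGFG P H V F k l - EG P H V k *m Fbar F k *m ctmx (EG P H V k)
     + sigma2C sigma2 *: Smx P V k) \in unitmx ->
  Sigmx P H V F sigma2 k (Aopt P H V F sigma2 k) \in unitmx ->
  (forall A : 'M[R[i]]_(\sum_(m < M) N, N),
      Sigmx P H V F sigma2 k A \in unitmx ->
      SE P H V F sigma2 tau_p tau_c k A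
        <= SE P H V F sigma2 tau_p tau_c k (Aopt P H V F sigma2 k)) /\
  SE P H V F sigma2 tau_p tau_c k (Aopt P H V F sigma2 k)
    = SEopt P H V F sigma2 tau_p tau_c k.
Proof.
move=> hs _ htc _ hV hG uT uQ uS.
exact: (main_res hs hV hG htc uT uQ uS).
Qed.
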